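(* Let $F\subseteq P_{3,4}$ be a face and $J\subseteq J_F$ a linear subspace of codimension $1$ in $J_F$ with basis $q_1,\dots,q_k$. If there exists $h\in J_F\setminus J$ such that $q_1^2+\dots+q_k^2-\epsilon h^2$ is not nonnegative on $\mathbb P^2(\mathbb R)$ for every $\epsilon>0$, then there is a face $G\subsetneq F$ with $J=J_G$.
   Context: $H_k\subseteq\mathbb R[x,y,z]$: real ternary forms of degree $k$; $P_{3,4}=\{f\in H_4: f\ge0\text{ on }\mathbb P^2(\mathbb R)\}$. A face of $P_{3,4}$ is a convex subcone $F$ such that $a,b\in P_{3,4}$, $a+b\in F$ imply $a,b\in F$. For a face $F$, $J_F=\{q\in H_2:q^2\in F\}$ (a linear subspace). *)

(* Defs.v *)
(* real ternary forms represented as polynomial functions R^3 -> R. *)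
From Stdlib Require Import Reals.
Open Scope R_scope.

Definition tfun := R -> R -> R -> R.

Fixpoint fsum (n : nat) (f : nat -> R) : R :=
  match n with
  | O => 0
  | S m => fsum m f + f m
  end.

Definition is_form (k : nat) (f : tfun) : Prop :=
  exists c : nat -> nat -> R, forall x y z,
    f x y z = fsum (S k) (fun i => fsum (S (k - i))
                (fun j => c i j * x ^ i * y ^ j * z ^ (k - i - j)%nat)).

Definition tzero : tfun := fun _ _ _ => 0.
Definition tadd (f g : tfun) : tfun := fun x y z => f x y z + g x y z.
Definition tscal (a : R) (f : tfun) : tfun := fun x y z => a * f x y z.
Definition tsq (q : tfun) : tfun := fun x y z => (q x y z) ^ 2.

(** Nonnegative on P^2(R) (for forms of even degree: nonnegative on R^3). *)
Definition nonneg3 (f : tfun) : Prop := forall x y z, 0 <= f x y z.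

Definition P34 (f : tfun) : Prop := is_form 4 f /\ nonneg3 f.

Definition is_face (F : tfun -> Prop) : Prop :=
  (forall f, F f -> P34 f) /\
  F tzero /\
  (forall f g, F f -> F g -> F (tadd f g)) /\
  (forall a f, 0 <= a -> F f -> F (tscal a f)) /\
  (forall a b, P34 a -> P34 b -> F (tadd a b) -> F a /\ F b).

Definition JF (F : tfun -> Prop) (q : tfun) : Prop := is_form 2 q /\ F (tsq q).

Definition is_subspace (J : tfun -> Prop) : Prop :=
  J tzero /\
  (forall f g, J f -> J g -> J (tadd f g)) /\
  (forall a f, J f -> J (tscal a f)).

Definition lincomb (k : nat) (c : nat -> R) (q : nat -> tfun) : tfun :=
  fun x y z => fsum k (fun i => c i * q i x y z).

Definition is_basis (J : tfun -> Prop) (k : nat) (q : nat -> tfun) : Prop :=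
  (forall i, (i < k)%nat -> J (q i)) /\
  (forall c : nat -> R, (forall x y z, lincomb k c q x y z = 0) ->
       forall i, (i < k)%nat -> c i = 0) /\
  (forall p, J p -> exists c : nat -> R, forall x y z, p x y z = lincomb k c q x y z).

Definition codim1 (J K : tfun -> Prop) : Prop :=
  exists h0, K h0 /\ ~ J h0 /\
    forall p, K p -> exists a : R, J (fun x y z => p x y z - a * h0 x y z).

Definition sumsq (k : nat) (q : nat -> tfun) : tfun :=
  fun x y z => fsum k (fun i => (q i x y z) ^ 2).

(* Main.v *)
Require Import Defs.
From Stdlib Require Import Reals Lra Psatz FunctionalExtensionality.
Open Scope R_scope.

Lemma fsum_ext n f g : (forall i, f i = g i) -> fsum n f = fsum n g.
Proof. intros H; induction n; simpl; [reflexivity| rewrite IHn, H; reflexivity]. Qed.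

Lemma fsum_lin n a b f g :
  fsum n (fun i => a * f i + b * g i) = a * fsum n f + b * fsum n g.
Proof. induction n; simpl; [ring| rewrite IHn; ring]. Qed.

Lemma fsum_zero n f : (forall i, f i = 0) -> fsum n f = 0.
Proof. intros H; induction n; simpl; [reflexivity| rewrite IHn, H; ring]. Qed.

Lemma form_ext k f g : (forall x y z, f x y z = g x y z) -> is_form k f -> is_form k g.
Proof. intros E [c Hc]; exists c; intros; rewrite <- E; apply Hc. Qed.

Lemma form_lin k a b f g : is_form k f -> is_form k g ->
  is_form k (fun x y z => a * f x y z + b * g x y z).
Proof.
  intros [c1 H1] [c2 H2]. exists (fun i j => a * c1 i j + b * c2 i j).
  intros x y z. rewrite H1, H2. rewrite <- fsum_lin. apply fsum_ext; intro i.
  rewrite <- fsum_lin. apply fsum_ext; intro j. ring.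
Qed.

Lemma form_zero k : is_form k tzero.
Proof.
  exists (fun _ _ => 0). intros x y z. unfold tzero.
  rewrite fsum_zero; [reflexivity|]. intro i. apply fsum_zero. intro j. ring.
Qed.

Lemma sumsq_nonneg n q x y z : 0 <= sumsq n q x y z.
Proof.
  induction n; unfold sumsq in *.
  - simpl; lra.
  - change (0 <= fsum n (fun i => q i x y z ^ 2) + q n x y z ^ 2).
    pose proof (pow2_ge_0 (q n x y z)). lra.
Qed.

Lemma lincomb_dom n c q : exists l, 0 <= l /\ forall x y z,
  (lincomb n c q x y z) ^ 2 <= l * sumsq n q x y z.
Proof.
  induction n.
  - exists 0. split; [lra|]. intros. unfold lincomb, sumsq; simpl. lra.
  - destruct IHn as [l [Hl H]]. exists (2*l + 2 * (c n)^2). split; [nra|].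
    intros x y z. specialize (H x y z). pose proof (sumsq_nonneg n q x y z).
    unfold lincomb, sumsq in *.
    change ((fsum n (fun i => c i * q i x y z) + c n * q n x y z)^2 <=
      (2*l + 2 * (c n)^2) * (fsum n (fun i => q i x y z ^ 2) + q n x y z ^ 2)).
    set (A := fsum n (fun i => c i * q i x y z)) in *.
    set (Sn := fsum n (fun i => q i x y z ^ 2)) in *.
    set (u := q n x y z). set (cc := c n).
    clearbody A Sn u cc.
    assert (0 <= l * u^2) by (apply Rmult_le_pos; [lra| apply pow2_ge_0]).
    assert (0 <= cc^2 * Sn) by (apply Rmult_le_pos; [apply pow2_ge_0| lra]).
    assert ((A + cc*u)^2 <= 2*A^2 + 2*(cc*u)^2) by (pose proof (pow2_ge_0 (A - cc*u)); nra).
    nra.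
Qed.

Section Main.
Variable S : tfun.
Hypothesis Snn : forall x y z, 0 <= S x y z.

Definition dom (u : tfun) := exists l, 0 <= l /\ forall x y z, (u x y z)^2 <= l * S x y z.

Lemma dom_lin a b u v : dom u -> dom v -> dom (fun x y z => a * u x y z + b * v x y z).
Proof.
  intros [l1 [H1 B1]] [l2 [H2 B2]]. exists (2*a^2*l1 + 2*b^2*l2). split; [nra|].
  intros x y z. specialize (B1 x y z). specialize (B2 x y z). specialize (Snn x y z).
  assert ((a * u x y z + b * v x y z)^2 <= 2*a^2*(u x y z)^2 + 2*b^2*(v x y z)^2)
    by (pose proof (pow2_ge_0 (a * u x y z - b * v x y z)); nra).
  assert (a^2 * (u x y z)^2 <= a^2 * (l1 * S x y z)) by (apply Rmult_le_compat_l; nra).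
  assert (b^2 * (v x y z)^2 <= b^2 * (l2 * S x y z)) by (apply Rmult_le_compat_l; nra).
  nra.
Qed.

Lemma dom_ext u v : (forall x y z, u x y z = v x y z) -> dom u -> dom v.
Proof. intros E [l [H B]]; exists l; split; auto; intros; rewrite <- E; auto. Qed.
End Main.

Theorem mainTheorem14 :
  forall (F J : tfun -> Prop) (k : nat) (q : nat -> tfun),
    is_face F ->
    is_subspace J ->
    (forall p, J p -> JF F p) ->
    codim1 J (JF F) ->
    is_basis J k q ->
    (exists h, JF F h /\ ~ J h /\
       forall eps : R, 0 < eps ->
         ~ nonneg3 (fun x y z => sumsq k q x y z - eps * (h x y z) ^ 2)) ->
    exists G : tfun -> Prop,
      is_face G /\
      (forall f, G f -> F f) /\
      (exists f, F f /\ ~ G f) /\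
      (forall p, J p <-> JF G p).
Proof.
  intros F J k q [FP [F0 [Fadd [Fsc Fface]]]] HJ HJF [h0 [Jh0 [nJh0 hcod]]]
    [Bq [_ Bspan]] [h [Fh [nJh Heps]]].
  set (S := sumsq k q).
  assert (Snn : forall x y z, 0 <= S x y z) by (intros; apply sumsq_nonneg).
  assert (FS : forall n, (n <= k)%nat -> F (sumsq n q)).
  { induction n; intros Hn.
    - exact F0.
    - change (F (tadd (sumsq n q) (tsq (q n)))). apply Fadd.
      + apply IHn; lia.
      + apply (HJF _ (Bq n ltac:(lia))). }
  assert (FSk : F S) by (apply FS; lia).
  assert (SP : P34 S) by (apply FP; exact FSk).
  assert (DJ : forall p, J p -> dom S p).
  { intros p Jp. destruct (Bspan p Jp) as [c Hc].
    destruct (lincomb_dom k c q) as [l [Hl B]]. exists l; split; auto.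
    intros; rewrite Hc; apply B. }
  assert (Nh : ~ dom S h).
  { intros [l [Hl B]]. apply (Heps (/(l+1))).
    - apply Rinv_0_lt_compat; lra.
    - intros x y z. specialize (B x y z). specialize (Snn x y z). fold S.
      assert (/(l+1) * h x y z ^ 2 <= /(l+1) * (l * S x y z)).
      { apply Rmult_le_compat_l; [left; apply Rinv_0_lt_compat; lra| lra]. }
      assert (/(l+1) * (l * S x y z) <= S x y z).
      { replace (S x y z) with (/(l+1) * ((l+1) * S x y z)) at 2 by (field; lra).
        apply Rmult_le_compat_l; [left; apply Rinv_0_lt_compat; lra| nra]. }
      lra. }
  exists (fun f => P34 f /\ exists l, 0 <= l /\ forall x y z, f x y z <= l * S x y z).
  assert (GF : forall f, (P34 f /\ exists l, 0 <= l /\ forall x y z, f x y z <= l * S x y z) -> F f).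
  { intros f [[Ff Nf] [l [Hl B]]].
    assert (E : tscal l S = tadd f (fun x y z => l * S x y z - f x y z)).
    { apply functional_extensionality; intro x; apply functional_extensionality; intro y;
      apply functional_extensionality; intro z; unfold tscal, tadd; ring. }
    assert (F (tscal l S)) by (apply Fsc; auto).
    rewrite E in H.
    assert (P2 : P34 (fun x y z => l * S x y z - f x y z)).
    { split.
      + eapply form_ext; [| apply (form_lin 4 l (-1) S f (proj1 SP) Ff)].
        intros; cbv beta; ring.
      + intros x y z; specialize (B x y z); lra. }
    exact (proj1 (Fface f _ (conj Ff Nf) P2 H)). }
  split; [|split; [exact GF| split]].
  - split; [intros f [Hf _]; exact Hf|]. split; [|split; [|split]].
    + split; [split; [apply form_zero| intros x y z; unfold tzero; lra]|].
      exists 0; split; [lra|]; intros; unfold tzero; lra.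
    + intros f g [[Ff Nf] [l1 [H1 B1]]] [[Fg Ng] [l2 [H2 B2]]]. split.
      * split.
        -- eapply form_ext; [| apply (form_lin 4 1 1 f g Ff Fg)]. intros; unfold tadd; ring.
        -- intros x y z; unfold tadd; specialize (Nf x y z); specialize (Ng x y z); lra.
      * exists (l1 + l2); split; [lra|]; intros x y z; unfold tadd;
        specialize (B1 x y z); specialize (B2 x y z); lra.
    + intros a f Ha [[Ff Nf] [l [Hl B]]]. split.
      * split.
        -- eapply form_ext; [| apply (form_lin 4 a 0 f f Ff Ff)]. intros; unfold tscal; ring.
        -- intros x y z; unfold tscal; specialize (Nf x y z); nra.
      * exists (a * l); split; [nra|]; intros x y z; unfold tscal.
        specialize (B x y z). rewrite Rmult_assoc. apply Rmult_le_compat_l; auto.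
    + intros a b Pa Pb [_ [l [Hl B]]]. split; split; auto.
      * exists l; split; auto; intros x y z; specialize (B x y z); unfold tadd in B;
        pose proof (proj2 Pb x y z); lra.
      * exists l; split; auto; intros x y z; specialize (B x y z); unfold tadd in B;
        pose proof (proj2 Pa x y z); lra.
  - exists (tsq h). split; [exact (proj2 Fh)|]. intros [_ [l [Hl B]]]. apply Nh.
    exists l; split; auto.
  - intros p. split.
    + intros Jp. destruct (HJF p Jp) as [Fp Fsp]. split; auto. split; [apply FP; auto|].
      exact (DJ p Jp).
    + intros [Fp Gp]. assert (JFp : JF F p) by (split; auto).
      destruct (hcod p JFp) as [a Ja].
      destruct (Req_dec a 0) as [Ha|Ha].
      * replace p with (fun x y z => p x y z - a * h0 x y z); auto.
        apply functional_extensionality; intro x; apply functional_extensionality; intro y;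
        apply functional_extensionality; intro z; rewrite Ha; ring.
      * exfalso. destruct (hcod h Fh) as [b Jb].
        assert (Dp : dom S p) by (destruct Gp as [_ [l [Hl B]]]; exists l; split; auto).
        assert (Dh0 : dom S h0).
        { eapply dom_ext; [| apply (dom_lin S Snn (/a) (-/a) _ _ Dp (DJ _ Ja))].
          intros; cbv beta; field; auto. }
        apply Nh. eapply dom_ext; [| apply (dom_lin S Snn 1 b _ _ (DJ _ Jb) Dh0)].
        intros; cbv beta; ring.
Qed.
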